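(* Let $(F,+,\cdot)$ be a (left) near-field such that the set $\{+_\sigma:\sigma\text{ a multiplicative automorphism of }F\}$ (equivalently, the set of near-fields $(F,+_\sigma,\cdot)$ induced by multiplicative automorphisms) is finite, and such that $F$ is finite dimensional as a right vector space over its division ring $F_{d}$ of right distributive elements. Let $\{V_k\}_{k\in I}$ be a family of multiplicative near-vector spaces over $F$. Then the direct product $\prod_{k\in I}V_k$, with componentwise addition and scalar multiplication, is a near-vector space over $F$.
   Context: A (left) near-field is $(F,+,\cdot,0,1)$ where $(F,\cdot,1)$ is a monoid, $(F\setminus\{0\},\cdot)$ is a group, $(F,+,0)$ is an abelian group, and $\alpha(\beta+\gamma)=\alpha\beta+\alpha\gamma$. $F_{d}$ is the set of $\gamma$ with $(\alpha+\beta)\gamma=\alpha\gamma+\beta\gamma$ for all $\alpha,\beta$; it is a division ring and $F$ is a right vector space over it. A multiplicative automorphism is a monoid automorphism of $(F,\cdot)$; for such $\tau$, $\alpha+_\tau\beta=\tau^{-1}(\tau(\alpha)+\tau(\beta))$. A near-vector space over $F$ is an abelian group $V$ with a left action of $(F,\cdot)$ by group endomorphisms, with $0,1,-1$ acting as $0,\mathrm{id},-\mathrm{id}$, the action free, and the quasi-kernel $Q(V)=\{u:\forall\alpha,\beta\ \exists\gamma,\ \alpha u+\beta u=\gamma u\}$ generating $V$ additively. For families $\boldsymbol\sigma=(\sigma_i)_{i\in J}$, $\boldsymbol\rho=(\rho_i)_{i\in J}$ of multiplicative automorphisms, $F^{\boldsymbol\sigma,\boldsymbol\rho}$ is the set of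 finitely supported $(\alpha_i)\in F^J$ with addition $(\alpha_i+_{\sigma_i}\beta_i)$ and scalar multiplication $\alpha\cdot(\alpha_i)=(\rho_i(\alpha)\alpha_i)$. A near-vector space $V$ over $F$ is multiplicative if there is a bijective additive map $\phi:V\to F^{\boldsymbol\sigma,\boldsymbol\rho}$ with $\phi(\alpha v)=\alpha\phi(v)$, for some such families. *)

(* Defs.v *)
From HB Require Import structures.
From Stdlib Require List.
From mathcomp Require Import all_boot all_algebra.
Set Implicit Arguments. Unset Strict Implicit. Unset Printing Implicit Defensive.
Import GRing.Theory.
Local Open Scope ring_scope.

Section NearField.
Variables (F : zmodType) (mul : F -> F -> F) (one : F).

Definition is_near_field : Prop :=
  (forall a b c, mul a (mul b c) = mul (mul a b) c) /\
  (forall a, mul one a = a) /\ (forall a, mul a one = a) /\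
  one != 0 /\
  (forall a b, a != 0 -> b != 0 -> mul a b != 0) /\
  (forall a, a != 0 -> exists2 b, b != 0 & mul b a = one /\ mul a b = one) /\
  (forall a b c, mul a (b + c) = mul a b + mul a c).

Definition right_distributive_elt (g : F) : Prop :=
  forall a b, mul (a + b) g = mul a g + mul b g.

Definition finite_dim_over_Fd : Prop :=
  exists s : seq F, forall a : F, exists c : seq F,
    size c = size s /\ (forall x, x \in c -> right_distributive_elt x) /\
    a = \sum_(i < size s) mul s`_i c`_i.

Definition mult_aut (sigma : F -> F) : Prop :=
  bijective sigma /\ (forall a b, sigma (mul a b) = mul (sigma a) (sigma b)) /\
  sigma one = one.

(* [op] is the operation +_sigma, i.e. op a b = sigma^-1 (sigma a + sigma b). *)
Definition is_sigma_add (sigma : F -> F) (op : F -> F -> F) : Prop :=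
  forall a b, sigma (op a b) = sigma a + sigma b.

Definition finitely_many_induced_additions : Prop :=
  exists L : seq (F -> F -> F), forall sigma, mult_aut sigma ->
    exists2 op, List.In op L & is_sigma_add sigma op.

Definition finsupp (J : Type) (f : J -> F) : Prop :=
  exists L : seq J, forall j, ~ List.In j L -> f j = 0.

Section NVS.
Variables (V : Type) (addV : V -> V -> V) (zeroV : V) (oppV : V -> V)
          (act : F -> V -> V).

Definition quasi_kernel (u : V) : Prop :=
  forall a b, exists c, addV (act a u) (act b u) = act c u.

Definition qk_generates : Prop :=
  forall v, exists s : seq (bool * V),
    (forall p, List.In p s -> quasi_kernel p.2) /\
    v = foldr (fun p acc => addV (if p.1 then oppV p.2 else p.2) acc) zeroV s.

Definition is_nvs : Prop :=
  (associative addV /\ commutative addV /\ left_id zeroV addV /\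
   left_inverse zeroV oppV addV) /\
  (forall a u v, act a (addV u v) = addV (act a u) (act a v)) /\
  (forall v, act one v = v) /\
  (forall a b v, act (mul a b) v = act a (act b v)) /\
  (forall v, act 0 v = zeroV) /\
  (forall v, act (- one) v = oppV v) /\
  (forall a b v, act a v = act b v -> a = b \/ v = zeroV) /\
  qk_generates.

(* V is a multiplicative near-vector space: a bijective additive map
   phi : V -> F^{sigma,rho} commuting with scalars. Elements of
   F^{sigma,rho} are the finitely supported functions J -> F. *)
Definition is_mult_nvs : Prop :=
  is_nvs /\
  exists (J : Type) (sigma rho : J -> F -> F) (phi : V -> J -> F),
    (forall j, mult_aut (sigma j)) /\ (forall j, mult_aut (rho j)) /\
    (forall v, finsupp (phi v)) /\
    (forall u v, phi u =1 phi v -> u = v) /\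
    (forall g : J -> F, finsupp g -> exists v, phi v =1 g) /\
    (forall u v j, (sigma j) (phi (addV u v) j) = sigma j (phi u j) + sigma j (phi v j)) /\
    (forall a v j, phi (act a v) j = mul (rho j a) (phi v j)).
End NVS.
End NearField.

Definition prod_add (I : Type) (V : I -> Type) (addV : forall k, V k -> V k -> V k)
  (x y : forall k, V k) : forall k, V k := fun k => addV k (x k) (y k).
Definition prod_opp (I : Type) (V : I -> Type) (oppV : forall k, V k -> V k)
  (x : forall k, V k) : forall k, V k := fun k => oppV k (x k).
Definition prod_zero (I : Type) (V : I -> Type) (zeroV : forall k, V k)
  : forall k, V k := fun k => zeroV k.
Definition prod_act (F : Type) (I : Type) (V : I -> Type)
  (act : forall k, F -> V k -> V k) (a : F) (x : forall k, V k) : forall k, V k :=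
  fun k => act k a (x k).

(* Main.v *)
Require Import Defs.
From mathcomp Require Import all_boot all_algebra.
From Stdlib Require Import ClassicalEpsilon FunctionalExtensionality Classical.
Set Implicit Arguments. Unset Strict Implicit. Unset Printing Implicit Defensive.
Import GRing.Theory.
Local Open Scope ring_scope.

Lemma nf_mulr0 (F : zmodType) (mul : F -> F -> F) one :
  is_near_field mul one -> forall a, mul a 0 = 0.
Proof.
case=> _ [_ [_ [_ [_ [_ D]]]]] a.
have h := D a 0 0; rewrite addr0 in h.
have := congr1 (fun t => t - mul a 0) h.
by rewrite /= subrr addrK.
Qed.

Lemma nf_mul0r (F : zmodType) (mul : F -> F -> F) one :
  is_near_field mul one -> forall a, mul 0 a = 0.
Proof.
move=> NF w; have M0 := nf_mulr0 NF.
case: NF => A [_ [R1 [_ [MZ [Inv _]]]]].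
case: (eqVneq w 0) => [->|wn0]; first by apply: M0.
case: (eqVneq (mul 0 w) 0) => // yn0; exfalso.
have [w' w'n0 [_ h2]] := Inv w wn0.
have := MZ _ _ yn0 w'n0.
by rewrite -A h2 R1 eqxx.
Qed.

Lemma maut0 (F : zmodType) (mul : F -> F -> F) one sg :
  is_near_field mul one -> mult_aut mul one sg -> sg 0 = 0.
Proof.
move=> NF [[g gK Kg] [M _]].
have e : sg (mul (g 0) 0) = mul 0 (sg 0) by rewrite M Kg.
by rewrite (nf_mulr0 NF) (nf_mul0r NF) in e.
Qed.

Lemma In_nth_seq (T : Type) (d x : T) (s : seq T) :
  List.In x s -> exists2 i, (i < size s)%N & nth d s i = x.
Proof.
elim: s => //= y s IH [->|/IH [i lt e]]; first by exists 0%N.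
by exists i.+1.
Qed.
Lemma decomp (F : zmodType) (mul : F -> F -> F) (one : F) (L : seq (F -> F -> F))
  (V : Type) (addV : V -> V -> V) (zeroV : V) (oppV : V -> V) (act : F -> V -> V) :
  is_near_field mul one ->
  (forall sigma, mult_aut mul one sigma -> exists2 op, List.In op L & is_sigma_add sigma op) ->
  is_mult_nvs mul one addV zeroV oppV act ->
  forall v : V, exists p : nat -> V,
   v = foldr (fun i acc => addV (p i) acc) zeroV (iota 0 (size L)) /\
   forall i a b, addV (act a (p i)) (act b (p i)) = act (nth (fun _ _ => 0) L i a b) (p i).
Proof.
move=> NF HL [NV [J [sg [rho [phi [Hs [Hr [Hfs [Hinj [Hsurj [Hadd Hact]]]]]]]]]]] v.
have M0 := nf_mulr0 NF.
have sg0 : forall j, sg j 0 = 0 by move=> j; exact: maut0 NF (Hs j).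
have sginj : forall j, injective (sg j).
  by move=> j; case: (Hs j) => [[g gK _] _]; exact: can_inj gK.
have phi0 : forall j, phi zeroV j = 0.
  move=> j; apply: (sginj j); rewrite sg0.
  have := Hadd zeroV zeroV j.
  case: NV => [[_ [_ [lid _]]] _]; rewrite lid => h.
  have := congr1 (fun t => t - sg j (phi zeroV j)) h.
  by rewrite /= subrr addrK.
set d := (fun _ _ => 0) : F -> F -> F.
set x := fun j => phi v j.
set P := fun j i => (i < size L)%N /\ forall a b,
   sg j (mul (rho j (nth d L i a b)) (x j)) =
   sg j (mul (rho j a) (x j)) + sg j (mul (rho j b) (x j)).
set cls := fun j => epsilon (inhabits 0%N) (P j).
have Pex : forall j, x j != 0 -> P j (cls j).
  move=> j xn0; apply: epsilon_spec.
  case: NF => A [L1 [R1 [_ [MZ [Inv D]]]]].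
  have [x' x'n0 [h1 h2]] := Inv (x j) xn0.
  set tau := fun a => sg j (mul x' (mul (rho j a) (x j))).
  have Htau : mult_aut mul one tau.
    case: (Hs j) => Bs [Ms S1]; case: (Hr j) => Br [Mr R1'].
    split; last split.
    - have -> : tau = sg j \o ((fun a => mul x' (mul a (x j))) \o rho j) by [].
      apply: bij_comp => //; apply: bij_comp => //.
      exists (fun b => mul (mul (x j) b) x') => a /=.
        by rewrite !A h2 L1 -A h2 R1.
      by rewrite !A h1 L1 -A h1 R1.
    - move=> a b; rewrite /tau -Ms Mr; congr (sg j _).
      by rewrite !A -(A _ (x j) x') h2 R1.
    - by rewrite /tau R1' L1 h1 S1.
  have [op opL Hop] := HL tau Htau.
  have [i ilt ei] := In_nth_seq d opL.
  exists i; split => // a b; rewrite ei.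
  have key : forall c, sg j (mul (rho j c) (x j)) = mul (sg j (x j)) (tau c).
    case: (Hs j) => _ [Ms _].
    by move=> c; rewrite /tau -Ms A h2 L1.
  by rewrite !key Hop D.
set g := fun i j => if cls j == i then x j else 0.
have fs : forall i, finsupp (g i).
  move=> i; have [Ls HLs] := Hfs v; exists Ls => j nj.
  by rewrite /g /x HLs //; case: ifP.
set p := fun i => proj1_sig (constructive_indefinite_description _ (Hsurj (g i) (fs i))).
have Hp : forall i j, phi (p i) j = g i j.
  by move=> i j; exact: (proj2_sig (constructive_indefinite_description _ (Hsurj (g i) (fs i)))) j.
exists p; split.
  apply: Hinj => j.
  have gen : forall l, uniq l -> phi (foldr (fun i acc => addV (p i) acc) zeroV l) j
      = if cls j \in l then x j else 0.
    elim=> [|i l IH] /=; first by rewrite phi0.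
    case/andP=> ni ul; apply: (sginj j).
    rewrite Hadd Hp IH // /g in_cons.
    case: (eqVneq (cls j) i) => [e|ne] /=.
      by rewrite e (negbTE ni) sg0 addr0.
    by rewrite sg0 add0r.
  rewrite gen ?iota_uniq //.
  case: (eqVneq (x j) 0) => [e|xn0]; first by case: ifP => _ //; exact: e.
  have [lt _] := Pex j xn0.
  by rewrite mem_iota add0n lt.
move=> i a b; apply: Hinj => j; apply: (sginj j).
rewrite Hadd !Hact !Hp /g.
case: ifP => [/eqP e|_]; last by rewrite !M0 sg0 addr0.
case: (eqVneq (x j) 0) => [->|xn0]; first by rewrite !M0 sg0 addr0.
have [_ H] := Pex j xn0; rewrite e in H.
by rewrite H.
Qed.

Theorem theorem3p17 (F : zmodType) (mul : F -> F -> F) (one : F)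
  (I : Type) (V : I -> Type)
  (addV : forall k, V k -> V k -> V k) (zeroV : forall k, V k)
  (oppV : forall k, V k -> V k) (act : forall k, F -> V k -> V k) :
  is_near_field mul one ->
  finitely_many_induced_additions mul one ->
  finite_dim_over_Fd mul ->
  (forall k, is_mult_nvs mul one (addV k) (zeroV k) (oppV k) (act k)) ->
  is_nvs mul one (prod_add addV) (prod_zero zeroV) (prod_opp oppV) (prod_act act).
Proof.
move=> NF [L HL] _ Hk.
have Hn := fun k => proj1 (Hk k).
repeat split.
- move=> x y z; apply: functional_extensionality_dep => k.
  by have [[A _] _] := Hn k; exact: A.
- move=> x y; apply: functional_extensionality_dep => k.
  by have [[_ [C _]] _] := Hn k; exact: C.
- move=> x; apply: functional_extensionality_dep => k.
  by have [[_ [_ [C _]]] _] := Hn k; exact: C.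
- move=> x; apply: functional_extensionality_dep => k.
  by have [[_ [_ [_ C]]] _] := Hn k; exact: C.
- move=> a x y; apply: functional_extensionality_dep => k.
  by have [_ [C _]] := Hn k; exact: C.
- move=> x; apply: functional_extensionality_dep => k.
  by have [_ [_ [C _]]] := Hn k; exact: C.
- move=> a b x; apply: functional_extensionality_dep => k.
  by have [_ [_ [_ [C _]]]] := Hn k; exact: C.
- move=> x; apply: functional_extensionality_dep => k.
  by have [_ [_ [_ [_ [C _]]]]] := Hn k; exact: C.
- move=> x; apply: functional_extensionality_dep => k.
  by have [_ [_ [_ [_ [_ [C _]]]]]] := Hn k; exact: C.
- move=> a b x H.
  case: (classic (exists k, x k <> zeroV k)) => [[k nk]|nex].
    have H' := f_equal (fun f => f k) H; rewrite /prod_act /= in H'.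
    have [_ [_ [_ [_ [_ [_ [Fr _]]]]]]] := Hn k.
    by case: (Fr _ _ _ H') => //; left.
  right; apply: functional_extensionality_dep => k.
  by apply: NNPP => nk; apply: nex; exists k.
move=> v.
pose P := fun k (w : V k) =>
  proj1_sig (constructive_indefinite_description _ (decomp NF HL (Hk k) w)).
have HP : forall k w, _ := fun k w =>
  proj2_sig (constructive_indefinite_description _ (decomp NF HL (Hk k) w)).
pose u := fun i => fun k => P k (v k) i.
exists (map (fun i => (false, u i)) (iota 0 (size L))); split.
  have gen : forall l p, List.In p (map (fun i => (false, u i)) l) ->
      quasi_kernel (prod_add addV) (prod_act act) p.2.
    elim=> //= i l IH p [<-|/IH //] a b /=.
    exists (nth (fun _ _ => 0) L i a b).
    apply: functional_extensionality_dep => k.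
    exact: (proj2 (HP k (v k))) i a b.
  exact: gen.
apply: functional_extensionality_dep => k.
transitivity (foldr (fun i acc => addV k (u i k) acc) (zeroV k) (iota 0 (size L))).
  exact: (proj1 (HP k (v k))).
elim: (iota 0 (size L)) => //= i l IH.
by rewrite /prod_add IH.
Qed.
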